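(* Let $I$ be an ideal on $\mathbb{N}$ with $\mathrm{Fin}\subseteq I$ and $I\neq\mathrm{Fin}$. The following are equivalent: (1) there exists a sequence $(x_n)\in\ell_1^{*}$ such that $A_I(x_n)$ is an open subset of $\mathbb{R}$; (2) $I$ is not maximal.
   Context: $\ell_1^{*}=\{(x_n)\in\ell_1 : x_n\neq 0\text{ for every }n\}$. An ideal on $\mathbb{N}$ is a family $I\subseteq P(\mathbb{N})$ closed under finite unions and subsets with $\mathbb{N}\notin I$; $\mathrm{Fin}$ is the ideal of finite sets. An ideal $I$ is maximal if there is no ideal $J$ with $I\subsetneq J$; equivalently, for every $A\subseteq\mathbb{N}$ either $A\in I$ or $\mathbb{N}\setminus A\in I$. $A_I(x_n)=\{\sum_{n\in A}x_n : A\in I\}$. *)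

(* Defs.v *)
From Stdlib Require Import Reals Rtopology Classical.
Open Scope R_scope.

Definition subsetN (B A : nat -> bool) : Prop := forall n, B n = true -> A n = true.
Definition unionN (A B : nat -> bool) : nat -> bool := fun n => orb (A n) (B n).
Definition fullN : nat -> bool := fun _ => true.

Definition is_ideal (I : (nat -> bool) -> Prop) : Prop :=
  (forall A B, I A -> I B -> I (unionN A B)) /\
  (forall A B, I A -> subsetN B A -> I B) /\
  ~ I fullN.

Definition finiteN (A : nat -> bool) : Prop := exists N : nat, forall n, A n = true -> (n < N)%nat.

Definition maximal_ideal (I : (nat -> bool) -> Prop) : Prop :=
  ~ exists J : (nat -> bool) -> Prop,
      is_ideal J /\ (forall A, I A -> J A) /\ (exists A, J A /\ ~ I A).

Definition in_l1 (x : nat -> R) : Prop := exists l, infinite_sum (fun n => Rabs (x n)) l.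
Definition in_l1_star (x : nat -> R) : Prop := in_l1 x /\ forall n, x n <> 0.

Definition sum_over (x : nat -> R) (A : nat -> bool) (s : R) : Prop :=
  infinite_sum (fun n => if A n then x n else 0) s.

Definition A_I (I : (nat -> bool) -> Prop) (x : nat -> R) : R -> Prop :=
  fun r => exists A, I A /\ sum_over x A r.

(* Main.v *)
Require Import Defs.
From Stdlib Require Import Reals Rtopology Classical Lia Lra.
From Coquelicot Require Import Coquelicot.
Open Scope R_scope.

Lemma inf_sum_plus f g a b : infinite_sum f a -> infinite_sum g b ->
  infinite_sum (fun n => f n + g n) (a+b).
Proof. intros Ha Hb. apply is_series_Reals in Ha; apply is_series_Reals in Hb.
  apply is_series_Reals. exact (is_series_plus _ _ _ _ Ha Hb). Qed.

Lemma inf_sum_minus f g a b : infinite_sum f a -> infinite_sum g b ->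
  infinite_sum (fun n => f n - g n) (a-b).
Proof. intros Ha Hb. apply is_series_Reals in Ha; apply is_series_Reals in Hb.
  apply is_series_Reals. exact (is_series_minus _ _ _ _ Ha Hb). Qed.

Lemma inf_sum_ext f g l : (forall n, f n = g n) -> infinite_sum f l -> infinite_sum g l.
Proof. intros He H. apply is_series_Reals in H. apply is_series_Reals.
  exact (is_series_ext _ _ _ He H). Qed.

Lemma inf_sum_nonneg h l : infinite_sum h l -> (forall n, 0 <= h n) -> 0 <= l.
Proof. intros H Hp. destruct (Rle_dec 0 l) as [|Hl]; auto. exfalso.
  destruct (H (-l)) as [N HN]; [lra|].
  specialize (HN N (le_n N)). unfold R_dist in HN.
  pose proof (cond_pos_sum h N Hp). pose proof (Rle_abs (sum_f_R0 h N - l)). lra. Qed.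

Lemma inf_sum_le f g a b : infinite_sum f a -> infinite_sum g b -> (forall n, f n <= g n) -> a <= b.
Proof. intros Ha Hb Hle. pose proof (inf_sum_minus _ _ _ _ Hb Ha) as H.
  apply inf_sum_nonneg in H; [lra|]. intro n; specialize (Hle n); lra. Qed.

Lemma inf_sum_ub h l M : infinite_sum h l -> (forall n, sum_f_R0 h n <= M) -> l <= M.
Proof. intros H Hb. destruct (Rle_dec l M) as [|Hl]; auto. exfalso.
  destruct (H (l - M)) as [N HN]; [lra|].
  specialize (HN N (le_n N)). unfold R_dist in HN. specialize (Hb N).
  pose proof (Rle_abs (-(sum_f_R0 h N - l))). rewrite Rabs_Ropp in H0. lra. Qed.

Lemma ex_sum_sub x B : in_l1 x -> exists s, sum_over x B s.
Proof. intros [l Hl]. apply is_series_Reals in Hl.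
  assert (E : ex_series (fun n => if B n then x n else 0)).
  { apply (@ex_series_le R_AbsRing R_CompleteNormedModule _ (fun n => Rabs (x n))); [|exists l; exact Hl].
    intro n. change norm with Rabs. destruct (B n).
    - apply Rle_refl.
    - rewrite Rabs_R0. apply Rabs_pos. }
  destruct E as [s Hs]. exists s. apply is_series_Reals. exact Hs. Qed.

Lemma sum_union x B1 B2 s1 s2 : sum_over x B1 s1 -> sum_over x B2 s2 ->
  (forall n, B1 n = true -> B2 n = false) -> sum_over x (unionN B1 B2) (s1+s2).
Proof. intros H1 H2 Hd. unfold sum_over in *.
  apply (inf_sum_ext (fun n => (if B1 n then x n else 0) + (if B2 n then x n else 0))).
  - intro n. unfold unionN. specialize (Hd n). destruct (B1 n), (B2 n); simpl; try lra; specialize (Hd eq_refl); discriminate.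
  - apply inf_sum_plus; auto. Qed.

Definition single (m : nat) : nat -> bool := fun n => Nat.eqb n m.

Lemma sum_single x m : sum_over x (single m) (x m).
Proof. unfold sum_over, single.
  assert (K : forall N, sum_f_R0 (fun n => if Nat.eqb n m then x n else 0) N =
     if Nat.leb m N then x m else 0).
  { induction N.
    - simpl. destruct m; simpl; reflexivity.
    - cbn [sum_f_R0]. rewrite IHN. destruct (Nat.eqb (S N) m) eqn:E.
      + apply Nat.eqb_eq in E. subst. rewrite (proj2 (Nat.leb_gt (S N) N)) by lia.
        rewrite Nat.leb_refl. lra.
      + apply Nat.eqb_neq in E. destruct (Nat.leb m N) eqn:E1; destruct (Nat.leb m (S N)) eqn:E2;
        try lra.
        * apply Nat.leb_le in E1; apply Nat.leb_gt in E2; lia.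
        * apply Nat.leb_gt in E1; apply Nat.leb_le in E2; lia. }
  intros eps He. exists m. intros n Hn. rewrite K.
  rewrite (proj2 (Nat.leb_le m n)) by lia. unfold R_dist. rewrite Rminus_diag, Rabs_R0. lra. Qed.
Fixpoint rk (D : nat -> bool) (n : nat) : nat :=
  match n with 0 => 0 | S k => ((if D k then 1 else 0) + rk D k)%nat end.

Definition dd (D : nat -> bool) (n : nat) : R := if D n then (1/2)^(S (rk D n)) else 0.

Lemma dd_partial D n : sum_f_R0 (dd D) n = 1 - (1/2)^(rk D (S n)).
Proof. induction n.
  - simpl. unfold dd. destruct (D 0%nat); simpl; lra.
  - cbn [sum_f_R0]. rewrite IHn. unfold dd. cbn [rk]. destruct (D (S n)); simpl; lra. Qed.

Lemma rk_mono D n m : (n <= m)%nat -> (rk D n <= rk D m)%nat.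
Proof. induction 1; auto. simpl. lia. Qed.

Lemma rk_unb D : ~ finiteN D -> forall K, exists n, (K <= rk D n)%nat.
Proof. intros Hinf K. induction K.
  - exists 0%nat. lia.
  - destruct IHK as [n Hn].
    assert (exists n', (n <= n')%nat /\ D n' = true) as [n' [H1 H2]].
    { apply NNPP. intro Hc. apply Hinf. exists n. intros k Hk.
      destruct (Nat.lt_ge_cases k n); auto. exfalso. apply Hc. exists k. auto. }
    exists (S n'). simpl. rewrite H2. pose proof (rk_mono D _ _ H1). lia. Qed.

Lemma half_pow_small D : ~ finiteN D -> forall eps, 0 < eps ->
  exists N, forall n, (n >= N)%nat -> (1/2)^(rk D n) < eps.
Proof. intros Hinf eps He.
  destruct (pow_lt_1_zero (1/2)) with (y := eps) as [K HK]; auto.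
  { rewrite Rabs_right; lra. }
  destruct (rk_unb D Hinf K) as [N HN]. exists N. intros n Hn.
  specialize (HK (rk D n)). rewrite Rabs_right in HK.
  - apply HK. pose proof (rk_mono D _ _ Hn). lia.
  - apply Rle_ge, pow_le; lra. Qed.

Lemma dd_sum D : ~ finiteN D -> infinite_sum (dd D) 1.
Proof. intros Hinf eps He. destruct (half_pow_small D Hinf eps He) as [N HN].
  exists N. intros n Hn. rewrite dd_partial. unfold R_dist.
  replace (1 - (1/2)^(rk D (S n)) - 1) with (- (1/2)^(rk D (S n))) by ring.
  rewrite Rabs_Ropp, Rabs_right. apply HN; lia. apply Rle_ge, pow_le; lra. Qed.

Section Greedy.
Variable D : nat -> bool.
Variable v : R.

Fixpoint gp (n : nat) : R :=
  match n with 0 => 0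
  | S k => if D k then (if Rle_dec (gp k + dd D k) v then gp k + dd D k else gp k) else gp k end.

Definition gS (n : nat) : bool := D n && (if Rle_dec (gp n + dd D n) v then true else false).

Lemma gp_step n : gp (S n) = gp n + (if gS n then dd D n else 0).
Proof. unfold gS. simpl. destruct (D n); simpl; [|lra].
  destruct (Rle_dec (gp n + dd D n) v); lra. Qed.

Lemma gp_partial n : sum_f_R0 (fun k => if gS k then dd D k else 0) n = gp (S n).
Proof. induction n.
  - simpl sum_f_R0. rewrite gp_step. simpl. lra.
  - cbn [sum_f_R0]. rewrite IHn. rewrite (gp_step (S n)). reflexivity. Qed.

Lemma gp_inv : 0 <= v <= 1 -> forall n, 0 <= v - gp n <= (1/2)^(rk D n).
Proof. intros Hv n. induction n.
  - simpl. lra.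
  - simpl. unfold dd. destruct (D n).
    + simpl. destruct (Rle_dec (gp n + (1/2) * (1/2)^(rk D n)) v); lra.
    + simpl. lra. Qed.

Lemma greedy_sum : ~ finiteN D -> 0 <= v <= 1 ->
  infinite_sum (fun k => if gS k then dd D k else 0) v.
Proof. intros Hinf Hv eps He. destruct (half_pow_small D Hinf eps He) as [N HN].
  exists N. intros n Hn. rewrite gp_partial. unfold R_dist.
  pose proof (gp_inv Hv (S n)). rewrite Rabs_left1 by lra.
  specialize (HN (S n) ltac:(lia)). lra. Qed.

Lemma gS_D n : gS n = true -> D n = true.
Proof. unfold gS. destruct (D n); auto. Qed.
End Greedy.
Definition xx (D A : nat -> bool) (n : nat) : R :=
  if D n then (1/2)^(S (rk D n)) else if A n then (1/2)^n else - (1/2)^n.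

Lemma greedy_x D A w : ~ finiteN D -> 0 <= w <= 1 ->
  exists S, subsetN S D /\ sum_over (xx D A) S w.
Proof. intros Hinf Hw. exists (gS D w). split.
  - intros n; apply gS_D.
  - unfold sum_over. apply (inf_sum_ext (fun k => if gS D w k then dd D k else 0)).
    + intro n. destruct (gS D w n) eqn:E; auto. apply gS_D in E. unfold xx, dd. rewrite E. auto.
    + apply greedy_sum; auto. Qed.

Lemma xx_l1 D A : ~ finiteN D -> in_l1 (xx D A).
Proof. intros Hinf.
  assert (E : ex_series (fun n => Rabs (xx D A n))).
  { apply (@ex_series_le R_AbsRing R_CompleteNormedModule _ (fun n => dd D n + (1/2)^n)).
    - intro n. change norm with Rabs. rewrite Rabs_Rabsolu. unfold xx, dd.
      pose proof (pow_le (1/2) n ltac:(lra)).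
      pose proof (pow_le (1/2) (S (rk D n)) ltac:(lra)).
      destruct (D n). rewrite Rabs_right; lra.
      destruct (A n). rewrite Rabs_right; lra. rewrite Rabs_Ropp, Rabs_right; lra.
    - apply (@ex_series_plus R_AbsRing R_NormedModule).
      + exists 1. apply is_series_Reals. apply dd_sum; auto.
      + exists (/ (1 - 1/2)). apply is_series_geom. rewrite Rabs_right; lra. }
  destruct E as [l Hl]. exists l. apply is_series_Reals. exact Hl. Qed.

Lemma xx_nz D A n : xx D A n <> 0.
Proof. unfold xx. pose proof (pow_lt (1/2) n ltac:(lra)).
  pose proof (pow_lt (1/2) (S (rk D n)) ltac:(lra)).
  destruct (D n); [|destruct (A n)]; lra. Qed.

Lemma ideal_max I (hI : is_ideal I) (h0 : I (fun _ => false)) P : maximal_ideal I ->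
  I P \/ I (fun n => negb (P n)).
Proof. intros Hmax. apply NNPP. intro Hn. apply Hmax.
  destruct hI as [HU [HS HF]].
  exists (fun B => exists C, I C /\ subsetN B (unionN C P)). split; [split; [|split]|split].
  - intros B1 B2 [C1 [H1 S1]] [C2 [H2 S2]]. exists (unionN C1 C2). split; auto.
    intros n. unfold unionN. specialize (S1 n). specialize (S2 n). unfold unionN in *.
    destruct (B1 n), (B2 n), (C1 n), (C2 n), (P n); simpl in *; auto.
  - intros B1 B2 [C [H1 S1]] Hs. exists C. split; auto. intros n Hb. auto.
  - intros [C [HC Hs]]. apply Hn. right. apply (HS C); auto.
    intros n Hp. specialize (Hs n eq_refl). unfold unionN in Hs.
    destruct (P n), (C n); simpl in *; auto; discriminate.
  - intros A HA. exists A. split; auto. intros n H. unfold unionN. rewrite H. auto.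
  - exists P. split.
    + exists (fun _ => false). split; auto.
      intros n H. unfold unionN. rewrite H. auto.
    + intro. apply Hn. auto.
Qed.
Lemma fin_empty : finiteN (fun _ => false).
Proof. exists 0%nat. intros; discriminate. Qed.

Lemma fin_single m : finiteN (single m).
Proof. exists (S m). intros n H. unfold single in H. apply Nat.eqb_eq in H. lia. Qed.

Lemma dir1 I (hI : is_ideal I) (hFin : forall A, finiteN A -> I A) x :
  in_l1 x -> open_set (A_I I x) -> ~ maximal_ideal I.
Proof. intros Hl1 Hop Hmax.
  set (P := fun n => if Rlt_dec 0 (x n) then true else false).
  destruct (ideal_max I hI (hFin _ fin_empty) P Hmax) as [HP|HP].
  - destruct (ex_sum_sub x P Hl1) as [s Hs].
    destruct (Hop s (ex_intro _ P (conj HP Hs))) as [delta Hd].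
    destruct (Hd (s + delta/2)) as [C [HC HCs]].
    { unfold disc. replace (s + delta/2 - s) with (delta/2) by ring.
      pose proof (cond_pos delta). rewrite Rabs_right; lra. }
    pose proof (cond_pos delta).
    assert (s + delta/2 <= s); [|lra].
    apply (inf_sum_le _ _ _ _ HCs Hs). intro n. unfold P.
    destruct (C n), (Rlt_dec 0 (x n)); lra.
  - destruct (ex_sum_sub x (fun n => negb (P n)) Hl1) as [s Hs].
    destruct (Hop s (ex_intro _ _ (conj HP Hs))) as [delta Hd].
    destruct (Hd (s - delta/2)) as [C [HC HCs]].
    { unfold disc. replace (s - delta/2 - s) with (-(delta/2)) by ring.
      pose proof (cond_pos delta). rewrite Rabs_Ropp, Rabs_right; lra. }
    pose proof (cond_pos delta).
    assert (s <= s - delta/2); [|lra].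
    apply (inf_sum_le _ _ _ _ Hs HCs). intro n. unfold P.
    destruct (C n), (Rlt_dec 0 (x n)); simpl; lra.
Qed.
Lemma dir2_open I (hI : is_ideal I) (hFin : forall A, finiteN A -> I A) D A :
  I D -> ~ finiteN D -> ~ I A -> ~ I (fun n => negb (A n)) ->
  open_set (A_I I (xx D A)).
Proof. intros HD Hinf HA HAc. destruct hI as [HU [HS HF]].
  set (x := xx D A).
  assert (Hl1 : in_l1 x) by (apply xx_l1; auto).
  intros t [C [HC Ht]].
  set (C0 := fun n => andb (C n) (negb (D n))).
  set (CD := fun n => andb (C n) (D n)).
  assert (HC0 : I C0). { apply (HS C); auto. intros n; unfold C0; destruct (C n); auto. }
  destruct (ex_sum_sub x C0 Hl1) as [s0 Hs0].
  destruct (ex_sum_sub x CD Hl1) as [c Hc].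
  assert (Ht2 : t = s0 + c).
  { apply (uniqueness_sum (fun n => if C n then x n else 0)); auto.
    apply (inf_sum_ext (fun n => if unionN C0 CD n then x n else 0)).
    - intro n. unfold unionN, C0, CD. destruct (C n), (D n); reflexivity.
    - apply sum_union; auto. intro n. unfold C0, CD. destruct (C n), (D n); simpl; auto. }
  assert (Hc01 : 0 <= c <= 1).
  { split.
    - apply (inf_sum_nonneg _ _ Hc). intro n. unfold CD, x, xx.
      pose proof (pow_le (1/2) (S (rk D n)) ltac:(lra)).
      destruct (C n), (D n); simpl andb; cbv iota; lra.
    - apply (inf_sum_le _ _ _ _ Hc (dd_sum D Hinf)). intro n. unfold CD, x, xx, dd.
      pose proof (pow_le (1/2) (S (rk D n)) ltac:(lra)).
      destruct (C n), (D n); simpl andb; cbv iota; lra. }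
  assert (Hm : exists m, A m = false /\ C m = false /\ D m = false).
  { apply NNPP. intro Hn. apply HAc. apply (HS (unionN C D)); auto.
    intros n Hn'. unfold unionN. destruct (A n) eqn:E1; [discriminate|].
    destruct (C n) eqn:E2; auto. destruct (D n) eqn:E3; auto. exfalso; apply Hn. eauto. }
  assert (Hm' : exists m, A m = true /\ C m = false /\ D m = false).
  { apply NNPP. intro Hn. apply HA. apply (HS (unionN C D)); auto.
    intros n Hn'. unfold unionN.
    destruct (C n) eqn:E2; auto. destruct (D n) eqn:E3; auto. exfalso; apply Hn. eauto. }
  destruct Hm as [m [Am [Cm Dm]]]. destruct Hm' as [m' [Am' [Cm' Dm']]].
  assert (Hg : forall k, 0 < (1/2)^k <= 1).
  { intro k. split. apply pow_lt; lra. induction k; simpl; lra. }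
  assert (Hdisj : forall B S, subsetN S D -> (forall n, B n = true -> D n = false) ->
     forall n, B n = true -> S n = false).
  { intros B S HSD HB n Hb. destruct (S n) eqn:E; auto. apply HSD in E. rewrite (HB n Hb) in E. discriminate. }
  assert (HC0D : forall n, C0 n = true -> D n = false).
  { intros n. unfold C0. destruct (C n), (D n); simpl; auto. }
  assert (Hsm : forall n, single m n = true -> D n = false).
  { intros n H. unfold single in H. apply Nat.eqb_eq in H. subst; auto. }
  assert (Hsm' : forall n, single m' n = true -> D n = false).
  { intros n H. unfold single in H. apply Nat.eqb_eq in H. subst; auto. }
  assert (HC0m : forall n, C0 n = true -> single m n = false).
  { intros n H. unfold single. destruct (Nat.eqb n m) eqn:E; auto. apply Nat.eqb_eq in E. subst.
    unfold C0 in H. rewrite Cm in H. discriminate. }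
  assert (HC0m' : forall n, C0 n = true -> single m' n = false).
  { intros n H. unfold single. destruct (Nat.eqb n m') eqn:E; auto. apply Nat.eqb_eq in E. subst.
    unfold C0 in H. rewrite Cm' in H. discriminate. }
  assert (xm : x m = - (1/2)^m) by (unfold x, xx; rewrite Dm, Am; reflexivity).
  assert (xm' : x m' = (1/2)^m') by (unfold x, xx; rewrite Dm', Am'; reflexivity).
  assert (Hpos : 0 < Rmin ((1/2)^m) ((1/2)^m')) by (apply Rmin_pos; apply Hg).
  exists (mkposreal _ Hpos). intros y Hy. unfold disc in Hy. simpl in Hy.
  apply Rabs_def2 in Hy. pose proof (Rmin_l ((1/2)^m) ((1/2)^m')).
  pose proof (Rmin_r ((1/2)^m) ((1/2)^m')). pose proof (Hg m). pose proof (Hg m').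
  destruct (Rle_dec 0 (y - s0)) as [K0|K0]; [destruct (Rle_dec (y - s0) 1) as [K1|K1]|].
  - destruct (greedy_x D A (y - s0) Hinf (conj K0 K1)) as [S [HSD HSs]].
    exists (unionN C0 S). split.
    + apply HU; auto. apply (HS D); auto.
    + replace y with (s0 + (y - s0)) by ring. apply sum_union; auto.
      apply Hdisj; auto.
  - destruct (greedy_x D A (y - s0 - (1/2)^m') Hinf ltac:(lra)) as [S [HSD HSs]].
    exists (unionN (unionN C0 (single m')) S). split.
    + apply HU; [apply HU|]; auto. apply hFin, fin_single. apply (HS D); auto.
    + replace y with ((s0 + x m') + (y - s0 - (1/2)^m')) by (rewrite xm'; ring).
      apply (sum_union x (unionN C0 (single m')) S (s0 + x m')).
      * apply (sum_union x C0 (single m') s0 (x m')); auto. apply sum_single.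
      * exact HSs.
      * apply Hdisj; [exact HSD|]. intros n Hn. unfold unionN in Hn.
        apply Bool.orb_true_iff in Hn as [Hn|Hn]; auto.
  - destruct (greedy_x D A (y - s0 + (1/2)^m) Hinf ltac:(lra)) as [S [HSD HSs]].
    exists (unionN (unionN C0 (single m)) S). split.
    + apply HU; [apply HU|]; auto. apply hFin, fin_single. apply (HS D); auto.
    + replace y with ((s0 + x m) + (y - s0 + (1/2)^m)) by (rewrite xm; ring).
      apply (sum_union x (unionN C0 (single m)) S (s0 + x m)).
      * apply (sum_union x C0 (single m) s0 (x m)); auto. apply sum_single.
      * exact HSs.
      * apply Hdisj; [exact HSD|]. intros n Hn. unfold unionN in Hn.
        apply Bool.orb_true_iff in Hn as [Hn|Hn]; auto.
Qed.
Theorem mainTheorem14 (I : (nat -> bool) -> Prop)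
  (hI : is_ideal I)
  (hFin : forall A, finiteN A -> I A)
  (hneq : ~ (forall A, I A <-> finiteN A)) :
  (exists x : nat -> R, in_l1_star x /\ open_set (A_I I x)) <-> ~ maximal_ideal I.
Proof. split.
  - intros [x [[Hl1 _] Hop]]. exact (dir1 I hI hFin x Hl1 Hop).
  - intros Hnm. unfold maximal_ideal in Hnm. apply NNPP in Hnm.
    destruct Hnm as [J [HJ [HIJ [A [HJA HIA]]]]].
    assert (HAc : ~ I (fun n => negb (A n))).
    { intro H. apply HIJ in H. destruct HJ as [HU [HS HF]]. apply HF.
      apply (HS (unionN A (fun n => negb (A n)))). apply HU; auto.
      intros n _. unfold unionN. destruct (A n); auto. }
    assert (HD : exists D, I D /\ ~ finiteN D).
    { apply NNPP. intro Hn. apply hneq. intro B. split; auto.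
      intro HB. apply NNPP. intro Hf. apply Hn. eauto. }
    destruct HD as [D [HD Hinf]].
    exists (xx D A). split.
    + split. apply xx_l1; auto. apply xx_nz.
    + apply dir2_open; auto.
Qed.
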